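(* Let $\Sigma,T$ be finite. The guarded languages (over $(\Sigma,T)$) recognized by deterministic KAT automata over $(\Sigma,T)$ are precisely the deterministic regular guarded languages over $(\Sigma,T)$.
   Context: Atoms $\mathsf{At}_T=2^T$. Guarded strings over $(\Sigma,T)$ are words in $\mathsf{At}_T(\Sigma\mathsf{At}_T)^*$; a guarded language is a set of guarded strings; it is regular if it is a regular language over the finite alphabet $\mathsf{At}_T\cup\Sigma$. A guarded language $L$ is deterministic if for all distinct $w,w'\in L$: (i) $w$ is not a proper prefix of $w'$, (ii) the first position where $w,w'$ differ is an atom. A deterministic KAT automaton over $(\Sigma,T)$ is $A=(Q,\delta,\iota)$ with $Q$ finite, $\delta:Q\times\mathsf{At}_T\to\{\mathsf{accept},\mathsf{reject}\}+\Sigma\times Q$, $\iota:\mathsf{At}_T\to\{\mathsf{accept},\mathsf{reject}\}+\Sigma\times Q$. For $\gamma:\mathsf{At}_T\to\{\mathsf{accept},\mathsf{reject}\}+\Sigma\times Q$, $L_A(\gamma)$ is the smallest set such that $\gamma(\alpha)=\mathsf{accept}$ implies $\alpha\in L_A(\gamma)$, and $\gamma(\alpha)=(p,q)$ with $w\in L_A(\delta(q,-))$ implies $\alpha pw\in L_A(\gamma)$. The language recognized by $A$ is $L(A)=L_A(\iota)$. *)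

(* Defs.v *)
From mathcomp Require Import all_boot.
Set Implicit Arguments. Unset Strict Implicit. Unset Printing Implicit Defensive.

Section Guarded.
Variables (Sigma T : finType).

Definition atom := {set T}.
Definition letter := (atom + Sigma)%type.
Definition word := seq letter.
Definition language := word -> Prop.

Fixpoint guarded (w : word) : bool :=
  match w with
  | [:: inl _] => true
  | inl _ :: inr _ :: w' => guarded w'
  | _ => false
  end.

Definition guarded_language (L : language) : Prop :=
  forall w, L w -> guarded w.

Definition is_atom (x : letter) : bool := if x is inl _ then true else false.

Definition deterministic (L : language) : Prop :=
  forall w w', L w -> L w' -> w <> w' ->
    (~ exists v, w' = w ++ v) /\
    (forall u a b v v', w = u ++ a :: v -> w' = u ++ b :: v' -> a <> b ->
        is_atom a /\ is_atom b).

Record DFA : Type := { dstate : finType; dstart : dstate;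
                dfinal : pred dstate; dtrans : dstate -> letter -> dstate }.
Definition dfa_accepts (D : DFA) (w : word) : bool :=
  @dfinal D (foldl (@dtrans D) (@dstart D) w).
Definition regular (L : language) : Prop :=
  exists D : DFA, forall w, L w <-> dfa_accepts D w.

Inductive action (Q : Type) := Accept | Reject | Step of Sigma & Q.
Arguments Accept {Q}. Arguments Reject {Q}. Arguments Step {Q}.

Record KATAut := { kstate : finType;
                   kdelta : kstate -> atom -> action kstate;
                   kiota : atom -> action kstate }.

Inductive LA (A : KATAut) : (atom -> action (kstate A)) -> word -> Prop :=
  | LA_accept gamma (al : atom) :
      gamma al = Accept -> LA gamma [:: inl al]
  | LA_step gamma (al : atom) (p : Sigma) (q : kstate A) (w : word) :
      gamma al = Step p q -> LA (@kdelta A q) w ->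
      LA gamma (inl al :: inr p :: w).

Definition KAT_lang (A : KATAut) : language := LA (@kiota A).

End Guarded.

(* Main.v *)
Require Import Defs.
From mathcomp Require Import all_boot.
From Stdlib Require Import ClassicalEpsilon.
Set Implicit Arguments. Unset Strict Implicit. Unset Printing Implicit Defensive.

Section Proofs.
Variables (Sigma T : finType).
Local Notation letter := (letter Sigma T).
Local Notation word := (word Sigma T).
Local Notation ACC := (Accept _ _).
Local Notation REJ := (Reject _ _).

Lemma LA_inv (A : KATAut Sigma T) g (w : word) : @LA _ _ A g w <->
  (exists al, w = [:: inl al] /\ g al = ACC) \/
  (exists al p q w', w = inl al :: inr p :: w' /\ g al = Step p q /\ LA (@kdelta _ _ A q) w').
Proof.
split.
  case=> [g0 al H|g0 al p q w0 H1 H2]; [left; by exists al | right; by exists al, p, q, w0].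
case=> [[al [-> H]]|[al [p [q [w' [-> [H1 H2]]]]]]]; [exact: LA_accept | exact: LA_step H1 H2].
Qed.

Lemma LA_guarded (A : KATAut Sigma T) g (w : word) : @LA _ _ A g w -> guarded w.
Proof. by elim. Qed.

Lemma guarded_head (x : letter) w : guarded (x :: w) -> is_atom x.
Proof. by case: x => //; case: w. Qed.

Lemma LA_prefix (A : KATAut Sigma T) g (w : word) v :
  @LA _ _ A g w -> LA g (w ++ v) -> v = [::].
Proof.
move=> H; elim: H v => [g0 al Hg|g0 al p q w0 Hg H IH] v.
  case: v => // x v /LA_inv [[al' [e _]]|[al' [p [q [w' [e [H1 _]]]]]]].
    by move/(congr1 size): e.
  by case: e => ? _ _; subst; rewrite Hg in H1.
move=> /LA_inv [[al' [e _]]|[al' [p' [q' [w' [e [H1 H2]]]]]]].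
  by move/(congr1 size): e.
case: e => ? ? ?; subst. rewrite Hg in H1. case: H1 => ?; subst. exact: IH.
Qed.

Lemma LA_diff (A : KATAut Sigma T) n : forall g (u : word) a b v v', size u <= n ->
  @LA _ _ A g (u ++ a :: v) -> LA g (u ++ b :: v') -> a <> b -> is_atom a /\ is_atom b.
Proof.
elim: n => [|n IH] g [|x [|y u]] a b v v' //= Hs.
- by move=> /LA_guarded/guarded_head ? /LA_guarded/guarded_head.
- by move=> /LA_guarded/guarded_head ? /LA_guarded/guarded_head.
- move=> /LA_inv [[al [e _]]|[al [p [q [w [e [H1 _]]]]]]]; first by move/(congr1 size): e.
  case: e => ? ? ?; subst.
  move=> /LA_inv [[al' [e _]]|[al' [p' [q' [w' [e [H1' _]]]]]]]; first by move/(congr1 size): e.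
  case: e => ? ? ?; subst. by rewrite H1 in H1'; case: H1' => ->.
- move=> /LA_inv [[al [e _]]|[al [p [q [w [e [H1 H2]]]]]]]; first by move/(congr1 size): e.
  case: e => ? ? ?; subst.
  move=> /LA_inv [[al' [e _]]|[al' [p' [q' [w' [e [H1' H2']]]]]]]; first by move/(congr1 size): e.
  case: e => ? ? ?; subst. rewrite H1 in H1'; case: H1' => ? ?; subst.
  by apply: (IH _ u a b v v' _ H2 H2') => //; apply: ltnW.
Qed.

Lemma LA_det (A : KATAut Sigma T) g : deterministic (@LA _ _ A g).
Proof.
move=> w w' Hw Hw' ne; split.
  case=> v e; subst; have ev := LA_prefix Hw Hw'; apply: ne; by rewrite ev cats0.
move=> u a b v v' ew ew'; subst; exact: (@LA_diff A (size u) g u a b v v' (leqnn _) Hw Hw').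
Qed.


Section Dir1.
Variable A : KATAut Sigma T.
Local Notation Q := (kstate A).
Definition St : finType := (option Q + (Sigma * Q) + bool)%type.
Definition gam (o : option Q) := if o is Some q then @kdelta _ _ A q else @kiota _ _ A.
Definition ktrans (s : St) (x : letter) : St :=
  match s, x with
  | inl (inl o), inl al =>
      match gam o al with Accept => inr true | Reject => inr false
                     | Step p q => inl (inr (p, q)) end
  | inl (inr (p, q)), inr p' => if p' == p then inl (inl (Some q)) else inr false
  | _, _ => inr false
  end.
Definition kfinal : pred St := fun s => s == inr true.
Definition kDFA : DFA Sigma T := Build_DFA (inl (inl None) : St) kfinal ktrans.

Lemma dead (w : word) : foldl ktrans (inr false) w = inr false.
Proof. by elim: w. Qed.

Lemma kmain n : forall (w : word) o, size w <= n ->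
  (LA (gam o) w <-> kfinal (foldl ktrans (inl (inl o)) w)).
Proof.
elim: n => [|n IH] [|[al|p] w] o //= Hs.
- split=> //; move/LA_inv=> [[? [e _]]|[? [? [? [? [e _]]]]]]; by move/(congr1 size): e.
- split=> //; move/LA_inv=> [[? [e _]]|[? [? [? [? [e _]]]]]]; by move/(congr1 size): e.
- case E: (gam o al) => [| |p q].
  + case: w Hs => [|x w] Hs /=; first by split=> // _; exact: LA_accept.
    rewrite dead; split=> //.
    move/LA_inv=> [[? [e _]]|[? [? [? [? [e [H1 _]]]]]]]; first by move/(congr1 size): e.
    by case: e => ? _ _; subst; rewrite E in H1.
  + rewrite dead; split=> //.
    move/LA_inv=> [[? [e H]]|[? [? [? [? [e [H1 _]]]]]]].
      by case: e => ?; subst; rewrite E in H.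
    by case: e => ? _; subst; rewrite E in H1.
  + case: w Hs => [|[al'|p'] w] Hs /=.
    * split=> //; move/LA_inv=> [[? [e H]]|[? [? [? [? [e [H1 _]]]]]]].
        by case: e => ?; subst; rewrite E in H.
      by move/(congr1 size): e.
    * rewrite dead; split=> //.
      move/LA_inv=> [[? [e H]]|[? [? [? [? [e [H1 _]]]]]]]; first by move/(congr1 size): e.
      by case: e.
    * have IH' := IH w (Some q) (ltnW Hs).
      case: eqP => [->|ne].
        rewrite -IH'; split.
          move/LA_inv=> [[? [e H]]|[? [? [q' [? [e [H1 H2]]]]]]]; first by move/(congr1 size): e.
          by case: e => ? ? ?; subst; rewrite E in H1; case: H1 => ?; subst.
        by move=> H; apply: LA_step E H.
      rewrite dead; split=> //.
      move/LA_inv=> [[? [e H]]|[? [? [q' [? [e [H1 H2]]]]]]]; first by move/(congr1 size): e.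
      by case: e => ? ? ?; subst; rewrite E in H1; case: H1 => ? ?; subst; case: (ne erefl).
- split; first by move/LA_guarded.
  suff ->: kfinal (foldl ktrans (inr false) w) = false by [].
  by elim: w {Hs}.
Qed.
End Dir1.


Section Dir2.
Variable D : DFA Sigma T.
Variable L : language Sigma T.
Hypothesis HD : forall w, L w <-> dfa_accepts D w.
Hypothesis Hg : guarded_language L.
Hypothesis Hdet : deterministic L.
Local Notation S := (dstate D).

Definition Lres (s : S) (w : word) : bool := @dfinal _ _ D (foldl (@dtrans _ _ D) s w).

Definition kdel (s : S) (al : atom T) : action Sigma S :=
  if Lres s [:: inl al] then ACC else
  match excluded_middle_informative
          (exists p, exists w, Lres s (inl al :: inr p :: w)) with
  | left H => let p := proj1_sig (constructive_indefinite_description _ H) in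
              Step p (dtrans (dtrans s (inl al)) (inr p))
  | right _ => REJ
  end.

Definition KA : KATAut Sigma T := Build_KATAut kdel (kdel (@dstart _ _ D)).

Lemma LresE (x w : word) : Lres (foldl (@dtrans _ _ D) (@dstart _ _ D) x) w = dfa_accepts D (x ++ w).
Proof. by rewrite /Lres /dfa_accepts foldl_cat. Qed.

Lemma size_neq (x y : word) : size x <> size y -> x <> y.
Proof. by move=> H e; apply: H; rewrite e. Qed.

Lemma kmain2 n : forall (w x : word), size w <= n ->
  (forall w', guarded (x ++ w') = guarded w') ->
  (@LA _ _ KA (kdel (foldl (@dtrans _ _ D) (@dstart _ _ D) x)) w <-> L (x ++ w)).
Proof.
elim: n => [|n IH] w x Hs Hx.
  case: w Hs => // _; split; first by move/LA_guarded.
  by move/Hg; rewrite Hx.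
set s := foldl _ _ x.
split.
  move/LA_inv=> [[al [-> H]]|[al [p [q [w' [ew [H1 H2]]]]]]].
    apply/HD; rewrite -LresE -/s.
    by move: H; rewrite /kdel; case: (Lres s _) => //; case: excluded_middle_informative.
  move: H1; rewrite /kdel; case: (Lres s _) => //.
  case: excluded_middle_informative => // H [ep eq0].
  have Hx' : forall w'', guarded ((x ++ [:: inl al; inr p]) ++ w'') = guarded w''.
    by move=> w''; rewrite -catA Hx.
  move: Hs; rewrite ew /= ltnS => Hs.
  have := IH w' (x ++ [:: inl al; inr p]) (ltnW Hs) Hx'.
  rewrite -catA /= foldl_cat /= -/s; rewrite ep in eq0; rewrite eq0 => <-.
  exact: H2.
move=> Lw.
have gw : guarded w by rewrite -Hx; exact: Hg.
case: w Hs Lw gw => [|[al|p0] [|[al'|p] w']] Hs Lw gw //.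
  apply: LA_accept; rewrite /kdel.
  have -> : Lres s [:: inl al] by rewrite LresE; apply/HD.
  by [].
have Hn : Lres s [:: inl al] = false.
  apply/negbTE/negP; rewrite LresE => /HD H.
  have Hne : x ++ [:: inl al] <> x ++ [:: inl al, inr p & w'].
    by apply: size_neq; rewrite !size_cat /= => /eqP; rewrite eqn_add2l.
  have [H1 _] := Hdet H Lw Hne.
  apply: H1.
  by exists (inr p :: w'); rewrite -catA.
have Hk : kdel s al = Step p (dtrans (dtrans s (inl al)) (inr p)).
  rewrite /kdel Hn.
  case: excluded_middle_informative => [H|H]; last first.
    by exfalso; apply: H; exists p, w'; rewrite LresE; apply/HD.
  case: (constructive_indefinite_description _ H) => p0 [w0 Hp0] /=.
  case: (p0 =P p) => [->//|ne].
  move: Hp0; rewrite LresE => /HD Hp0.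
  have Hne' : x ++ [:: inl al, inr p0 & w0] <> x ++ [:: inl al, inr p & w'].
    by move=> /eqP; rewrite eqseq_cat // => /andP [_ /eqP [e _]]; apply: ne.
  have := (Hdet Hp0 Lw Hne').2 (x ++ [:: inl al]) (inr p0) (inr p) w0 w'.
  rewrite -!catA => /(_ erefl erefl) [].
  - by move=> [e]; apply: ne.
  - by [].
apply: (@LA_step _ _ KA (kdel s) al p _ w' Hk).
have Hx' : forall w'', guarded ((x ++ [:: inl al; inr p]) ++ w'') = guarded w''.
  by move=> w''; rewrite -catA Hx.
move: Hs; rewrite /= ltnS => Hs.
have := IH w' (x ++ [:: inl al; inr p]) (ltnW Hs) Hx'.
rewrite -catA /= foldl_cat /= -/s => ->.
exact: Lw.
Qed.
End Dir2.

End Proofs.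

Theorem proposition4p12 (Sigma T : finType) (L : language Sigma T) :
  (exists A : KATAut Sigma T, forall w, L w <-> KAT_lang A w) <->
  [/\ guarded_language L, deterministic L & regular L].
Proof.
split.
  case=> A HA; split.
  - by move=> w /HA /LA_guarded.
  - move=> w w' /HA Hw /HA Hw' ne; exact: LA_det Hw Hw' ne.
  - exists (kDFA A) => w; rewrite HA; exact: (@kmain _ _ A (size w) w None (leqnn _)).
case=> Hg Hdet [D HD]; exists (KA D) => w.
symmetry; exact: (@kmain2 _ _ D L HD Hg Hdet (size w) w [::] (leqnn _) (fun _ => erefl)).
Qed.
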